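(* The sequence $\{k^2+k\}_{k=0}^{\infty}$ is a Legendre multiplier sequence.
   Context: The Legendre polynomials $\mathfrak{Le}_n(x)$ are defined by $\frac{1}{\sqrt{1-2xt+t^2}}=\sum_{k=0}^{\infty}\mathfrak{Le}_k(x)t^k$. A real sequence $\{\gamma_k\}_{k=0}^{\infty}$ is a Legendre multiplier sequence if, for every $n$ and all real $a_0,\dots,a_n$, the polynomial $\sum_{k=0}^n a_k\gamma_k\mathfrak{Le}_k(x)$ has only real zeros whenever $\sum_{k=0}^n a_k\mathfrak{Le}_k(x)$ has only real zeros. *)

(* Defs.v *)
From HB Require Import structures.
From mathcomp Require Import all_boot all_order all_algebra.
From mathcomp Require Import complex.
Import ComplexField.
Set Implicit Arguments. Unset Strict Implicit. Unset Printing Implicit Defensive.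
Import Order.TTheory GRing.Theory Num.Theory.
Local Open Scope ring_scope.

(* Legendre polynomials, via Bonnet's recurrence, which is equivalent to the
   generating function 1/sqrt(1-2xt+t^2) = sum_k Le_k(x) t^k:
   Le_0 = 1, Le_1 = X, (n+2) Le_{n+2} = (2n+3) X Le_{n+1} - (n+1) Le_n. *)
Fixpoint legendre_pair (R : fieldType) (n : nat) : {poly R} * {poly R} :=
  match n with
  | 0 => (1, 'X)
  | m.+1 =>
      let (p, q) := legendre_pair R m in
      (q, (m.+2%:R)^-1 *: ((m.*2.+3)%:R *: ('X * q) - (m.+1)%:R *: p))
  end.

Definition legendre (R : fieldType) (n : nat) : {poly R} := (legendre_pair R n).1.

Definition only_real_zeros (R : rcfType) (p : {poly R}) : Prop :=
  p = 0 \/ forall z : R[i], root (map_poly (fun r : R => (r%:C)%C) p) z -> Im z = 0.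

Definition legendre_multiplier_sequence (R : rcfType) (gamma : nat -> R) : Prop :=
  forall (n : nat) (a : nat -> R),
    only_real_zeros (\sum_(k < n.+1) a k *: legendre R k) ->
    only_real_zeros (\sum_(k < n.+1) (a k * gamma k) *: legendre R k).

(* Main.v *)
Require Import Defs.
From HB Require Import structures.
From mathcomp Require Import all_boot all_order all_algebra.
From mathcomp Require Import complex ring.
Set Implicit Arguments. Unset Strict Implicit. Unset Printing Implicit Defensive.
Import Order.TTheory GRing.Theory Num.Theory.
Local Open Scope ring_scope.
Lemma natpoly_neq0 (R : rcfType) n : (n.+1%:R : {poly R}) != 0.
Proof. by rewrite -polyC_natr polyC_eq0 pnatr_eq0. Qed.

Lemma step_alg (R : rcfType) (n : nat) (X p0 p1 p2 d0 d1 d2 : {poly R}) :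
  d1 = X * d0 + (n.+1)%:R * p0 ->
  X * d1 - d0 = (n.+1)%:R * p1 ->
  (n.+2)%:R * d2 = (n.*2.+3)%:R * (p1 + X * d1) - (n.+1)%:R * d0 ->
  (n.+2)%:R * p2 = (n.*2.+3)%:R * (X * p1) - (n.+1)%:R * p0 ->
  d2 = X * d1 + (n.+2)%:R * p1 /\ X * d2 - d1 = (n.+2)%:R * p2.
Proof.
move=> /eqP; rewrite -subr_eq0 => /eqP A.
move=> /eqP; rewrite -subr_eq0 => /eqP B.
move=> /eqP; rewrite -subr_eq0 => /eqP D.
move=> /eqP; rewrite -subr_eq0 => /eqP H.
have e : n.*2.+3 = (n.+1 + n.+2)%N by rewrite -addnn !addnS !addSn.
split; apply/eqP; rewrite -subr_eq0; apply/eqP;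
  apply: (mulfI (natpoly_neq0 R n.+1)); rewrite mulr0.
- transitivity (((n.+2)%:R * d2 - ((n.*2.+3)%:R * (p1 + X * d1) - (n.+1)%:R * d0))
     + (n.+1)%:R * (X * d1 - d0 - (n.+1)%:R * p1)).
    rewrite e natrD. ring.
  by rewrite D B mulr0 addr0.
- transitivity (X * ((n.+2)%:R * d2 - ((n.*2.+3)%:R * (p1 + X * d1) - (n.+1)%:R * d0))
     - (n.+2)%:R * ((n.+2)%:R * p2 - ((n.*2.+3)%:R * (X * p1) - (n.+1)%:R * p0))
     + (n.+1)%:R * (d1 - (X * d0 + (n.+1)%:R * p0))
     + (n.*2.+3)%:R * (X * (X * d1 - d0 - (n.+1)%:R * p1) - (d1 - (X * d0 + (n.+1)%:R * p0)))).
    rewrite e natrD. ring.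
  rewrite D B H A; ring.
Qed.

Section Leg.
Variable R : rcfType.
Local Notation P := (legendre R).

Lemma leg0 : P 0 = 1. Proof. by []. Qed.
Lemma leg1 : P 1 = 'X. Proof. by []. Qed.
Lemma legS n : P n.+1 = (legendre_pair R n).2.
Proof. by rewrite /legendre /=; case: (legendre_pair R n). Qed.
Lemma legSS n : (n.+2)%:R * P n.+2 =
   (n.*2.+3)%:R * ('X * P n.+1) - (n.+1)%:R * P n.
Proof.
rewrite legS /= legS /legendre.
case: (legendre_pair R n) => p q /=.
rewrite !mulr_natl -!scaler_nat scalerA mulfV ?scale1r //.
by rewrite pnatr_eq0.
Qed.

Lemma deriv_natM m (p : {poly R}) : (m%:R * p)^`() = m%:R * p^`().
Proof. by rewrite !mulr_natl derivMn. Qed.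

Lemma leg_inv n :
  (P n.+1)^`() = 'X * (P n)^`() + (n.+1)%:R * P n /\
  'X * (P n.+1)^`() - (P n)^`() = (n.+1)%:R * P n.+1.
Proof.
elim: n => [|n [A B]].
  rewrite leg0 leg1 derivX derivC.
  by rewrite mulr0 add0r !mulr1 subr0 mul1r.
have H := legSS n.
have D : (n.+2)%:R * (P n.+2)^`() =
   (n.*2.+3)%:R * (P n.+1 + 'X * (P n.+1)^`()) - (n.+1)%:R * (P n)^`().
  move: (congr1 deriv H); rewrite derivB !deriv_natM derivM derivX mul1r => ->.
  by [].
exact: step_alg A B D H.
Qed.

Lemma leg_ode k : (('X ^+ 2 - 1) * (P k)^`())^`() = ((k ^ 2 + k)%N)%:R * P k.
Proof.
case: k => [|n].
  by rewrite leg0 derivC mulr0 derivC mul0r.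
have [A B] := leg_inv n.
have C : ('X ^+ 2 - 1) * (P n.+1)^`() = (n.+1)%:R * ('X * P n.+1 - P n).
  apply/eqP; rewrite -subr_eq0; apply/eqP.
  transitivity ('X * ('X * (P n.+1)^`() - (P n)^`() - (n.+1)%:R * P n.+1)
     - ((P n.+1)^`() - ('X * (P n)^`() + (n.+1)%:R * P n))); first ring.
  by rewrite B A !subrr mulr0 subr0.
rewrite C deriv_natM derivB derivM derivX mul1r.
have -> : P n.+1 + 'X * (P n.+1)^`() - (P n)^`() = (n.+2)%:R * P n.+1.
  have -> : P n.+1 + 'X * (P n.+1)^`() - (P n)^`() = P n.+1 + (n.+1)%:R * P n.+1.
    by rewrite -B; ring.
  ring.
have -> : ((n.+1 ^ 2 + n.+1)%N = n.+1 * n.+2)%N.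
  by rewrite -mulnSr.
rewrite natrM; ring.
Qed.
End Leg.
Section K.
Variable C : numClosedFieldType.
Implicit Types (z w : C).

Lemma ImB' z w : 'Im (z - w) = 'Im z - 'Im w.
Proof. by rewrite raddfB. Qed.
Lemma ImD' z w : 'Im (z + w) = 'Im z + 'Im w.
Proof. by rewrite raddfD. Qed.

Lemma Im_inv_sub z w : 'Im w = 0 -> 'Im z != 0 -> 'Im ((z - w)^-1) * 'Im z < 0.
Proof.
move=> hw hz.
have zw : z - w != 0 by apply: contraNneq hz => /eqP; rewrite subr_eq0 => /eqP ->; exact/eqP.
rewrite ImV ImB' hw subr0 !mulNr mulrAC -expr2 oppr_lt0 divr_gt0 //.
  by rewrite -real_normK ?Creal_Im // exprn_gt0 // normr_gt0.
by rewrite exprn_gt0 // normr_gt0.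
Qed.

Lemma ratio_ind (s : seq C) z : (forall w, w \in s -> 'Im w = 0) -> 'Im z != 0 ->
  let Q := \prod_(w <- s) ('X - w%:P) in
  Q.[z] != 0 /\ 'Im (Q^`().[z] / Q.[z]) * 'Im z <= 0 /\
  (s != [::] -> 'Im (Q^`().[z] / Q.[z]) * 'Im z < 0).
Proof.
move=> hs hz; elim: s hs => [|w s IH] hs /=.
  by rewrite big_nil hornerC oner_neq0 derivC horner0 mul0r raddf0 mul0r lexx.
have H1 : forall u, u \in s -> 'Im u = 0 by move=> u hu; apply: hs; rewrite inE hu orbT.
have [hS [hle _]] := IH H1.
have hw : 'Im w = 0 by apply: hs; rewrite inE eqxx.
have zw : z - w != 0 by apply: contraNneq hz => /eqP; rewrite subr_eq0 => /eqP ->; exact/eqP.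
set S := \prod_(u <- s) ('X - u%:P) in hS hle *.
rewrite big_cons -/S derivM derivXsubC mul1r !hornerE.
have e : (S.[z] + (z - w) * S^`().[z]) / ((z - w) * S.[z]) =
   (z - w)^-1 + S^`().[z] / S.[z] by field; rewrite zw hS.
have lt : 'Im ((z - w)^-1 + S^`().[z] / S.[z]) * 'Im z < 0.
  rewrite ImD' mulrDl -[0]addr0; apply: ltr_leD => //.
  exact: Im_inv_sub.
split; first by rewrite mulf_neq0.
by rewrite e (ltW lt); split.
Qed.

Lemma deriv_real_roots (q : {poly C}) : q != 0 ->
  (forall z, root q z -> 'Im z = 0) -> q^`() != 0 ->
  forall z, root q^`() z -> 'Im z = 0.
Proof.
move=> q0 hq d0 z hz.
have [s hs] := closed_field_poly_normal q.
have lc0 : lead_coef q != 0 by rewrite lead_coef_eq0.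
have sr : forall w, w \in s -> 'Im w = 0.
  move=> w hw; apply: hq; rewrite hs rootZ // root_prod_XsubC //.
have [//|nz] := eqVneq ('Im z) 0.
have [_ [_ lt]] := ratio_ind sr nz.
have sn : s != [::].
  apply: contraNneq d0 => es; rewrite hs es big_nil derivZ derivC scaler0 //.
have := lt sn.
move: hz; rewrite hs derivZ rootZ // => /rootP ->.
by rewrite mul0r raddf0 mul0r ltxx.
Qed.
End K.

Section Main.
Variable R : rcfType.
Local Notation mp := (map_poly (real_complex R)).

Lemma orzE (p : {poly R}) : only_real_zeros p =
  (p = 0 \/ forall z : R[i], root (mp p) z -> 'Im z = 0).
Proof. by []. Qed.

Lemma orz_deriv (p : {poly R}) : only_real_zeros p -> only_real_zeros p^`().
Proof.
rewrite !orzE => -[->|H]; first by left; rewrite deriv0.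
have [->|nz] := eqVneq p^`() 0; first by left.
have [p0|p0] := eqVneq p 0; first by left; rewrite p0 deriv0.
right => z; rewrite -deriv_map => hz.
apply: (deriv_real_roots _ H _ hz).
  by rewrite map_poly_eq0.
by rewrite deriv_map map_poly_eq0.
Qed.

Lemma orz_mul (p : {poly R}) : only_real_zeros p ->
  only_real_zeros (('X ^+ 2 - 1) * p).
Proof.
rewrite !orzE => -[->|H]; first by left; rewrite mulr0.
right => z; rewrite rmorphM /= rmorphB /= rmorphXn /= map_polyX rmorph1 rootM.
case/orP; last exact: H.
rewrite /root !hornerE.
have -> : z ^+ 2 - 1 = (z - 1) * (z + 1) by ring.
rewrite mulf_eq0 subr_eq0 addr_eq0 => /orP [] /eqP ->.
  by apply/(Creal_ImP _); rewrite real1.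
by apply/(Creal_ImP _); rewrite realN real1.
Qed.

Lemma sum_ode n (a : nat -> R) :
  \sum_(k < n.+1) (a k * ((k ^ 2 + k)%N)%:R) *: legendre R k =
  (('X ^+ 2 - 1) * (\sum_(k < n.+1) a k *: legendre R k)^`())^`().
Proof.
rewrite linear_sum mulr_sumr linear_sum; apply: eq_bigr => k _.
rewrite /= derivZ -scalerAr derivZ leg_ode -scalerA.
by rewrite scaler_nat mulr_natl.
Qed.
End Main.

Theorem lemma4p6 (R : rcfType) :
  legendre_multiplier_sequence (fun k : nat => ((k ^ 2 + k)%N)%:R : R).
Proof.
move=> n a H; rewrite sum_ode.
by apply: orz_deriv; apply: orz_mul; apply: orz_deriv.
Qed.
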